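(* Let $m\geq3$ be odd, let $M(m)$ be the monoid with generators $\rho_1,\rho_2$ and the single relation $\rho_1\rho_2^{(m-1)/2}\rho_1=\rho_2^{(m+1)/2}$, and set $\Delta:=\rho_2^{\,m}$. Then $(M(m),\Delta)$ is a Garside monoid, and its group of fractions is the group $B(m)$ defined by the same presentation (which is isomorphic to the Artin–Tits group of dihedral type $I_2(m)$).
   Context: A Garside monoid is a pair $(M,\Delta)$ with $M$ a monoid and $\Delta\in M$ such that: (1) $M$ is left- and right-cancellative; (2) divisibility in $M$ is Noetherian, i.e. there is $\lambda:M\to\mathbb{Z}_{\geq 0}$ with $\lambda(ab)\geq\lambda(a)+\lambda(b)$ for all $a,b$ and $\lambda(a)\neq 0$ for $a\neq 1$; (3) any two elements of $M$ admit a left-lcm, a right-lcm, a left-gcd and a right-gcd (with respect to right- resp. left-divisibility as appropriate, where $a$ left-divides $c$ if $c=ab$ and $b$ right-divides $c$ if $c=ab$); (4) the left-divisors and the right-divisors of $\Delta$ coincide and generate $M$; (5) the set of divisors of $\Delta$ is finite. *)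

(* Defs.v *)
From mathcomp Require Import all_boot.
Set Implicit Arguments. Unset Strict Implicit. Unset Printing Implicit Defensive.

Section Presented.
Variable A : eqType.

Inductive mcong (R : seq A -> seq A -> Prop) : seq A -> seq A -> Prop :=
| mcong_refl u : mcong R u u
| mcong_sym u v : mcong R u v -> mcong R v u
| mcong_trans u v w : mcong R u v -> mcong R v w -> mcong R u w
| mcong_rel x y u v : R u v -> mcong R (x ++ u ++ y) (x ++ v ++ y).

(** Group words: letters (a, false) = a, (a, true) = a^-1. *)
Definition ginv (w : seq (A * bool)) : seq (A * bool) :=
  rev (map (fun p => (p.1, ~~ p.2)) w).
Definition iota (w : seq A) : seq (A * bool) := map (fun a => (a, false)) w.

Inductive gcong (R : seq A -> seq A -> Prop) :
    seq (A * bool) -> seq (A * bool) -> Prop :=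
| gcong_refl u : gcong R u u
| gcong_sym u v : gcong R u v -> gcong R v u
| gcong_trans u v w : gcong R u v -> gcong R v w -> gcong R u w
| gcong_rel x y u v : R u v -> gcong R (x ++ iota u ++ y) (x ++ iota v ++ y)
| gcong_free x y a b : gcong R (x ++ [:: (a, b); (a, ~~ b)] ++ y) (x ++ y).

Definition ldiv R (a c : seq A) := exists b, mcong R (a ++ b) c.
Definition rdiv R (b c : seq A) := exists a, mcong R (a ++ b) c.

Definition is_lcm (div : seq A -> seq A -> Prop) a b c :=
  [/\ div a c, div b c & forall d, div a d -> div b d -> div c d].
Definition is_gcd (div : seq A -> seq A -> Prop) a b c :=
  [/\ div c a, div c b & forall d, div d a -> div d b -> div d c].

Definition garside_monoid (R : seq A -> seq A -> Prop) (Delta : seq A) : Prop :=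
  [/\
      (forall a b c, mcong R (a ++ b) (a ++ c) -> mcong R b c) /\
      (forall a b c, mcong R (b ++ a) (c ++ a) -> mcong R b c),
      (* (2) Noetherian divisibility *)
      (exists lambda : seq A -> nat,
         [/\ forall a b, mcong R a b -> lambda a = lambda b,
             forall a b, lambda a + lambda b <= lambda (a ++ b)
           & forall a, ~ mcong R a [::] -> lambda a <> 0]),
      (forall a b, [/\ exists c, is_lcm (ldiv R) a b c,
                       exists c, is_lcm (rdiv R) a b c,
                       exists c, is_gcd (ldiv R) a b c &
                       exists c, is_gcd (rdiv R) a b c]),
      (forall x, ldiv R x Delta <-> rdiv R x Delta) /\
      (forall w, exists ws : seq (seq A),
          (forall x, x \in ws -> ldiv R x Delta) /\ mcong R w (flatten ws))
    &
      exists s : seq (seq A), forall x, ldiv R x Delta ->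
        exists2 y, y \in s & mcong R x y].

Definition group_of_fractions (R : seq A -> seq A -> Prop) : Prop :=
  (forall u v, gcong R (iota u) (iota v) -> mcong R u v) /\
  (forall g, exists a b, gcong R g (iota a ++ ginv (iota b))).
End Presented.

Definition gsubst (A B : eqType) (f : A -> seq (B * bool)) (w : seq (A * bool))
  : seq (B * bool) :=
  flatten (map (fun p => if p.2 then ginv (f p.1) else f p.1) w).

Definition pres_group_iso (A B : eqType) (R1 : seq A -> seq A -> Prop)
  (R2 : seq B -> seq B -> Prop) : Prop :=
  exists (f : A -> seq (B * bool)) (g : B -> seq (A * bool)),
    [/\ forall u v, gcong R1 u v -> gcong R2 (gsubst f u) (gsubst f v),
        forall u v, gcong R2 u v -> gcong R1 (gsubst g u) (gsubst g v),
        forall u, gcong R1 (gsubst g (gsubst f u)) u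
      & forall u, gcong R2 (gsubst f (gsubst g u)) u].

(** Generators: false = rho_1, true = rho_2. Relation of M(m):
    rho1 rho2^((m-1)/2) rho1 = rho2^((m+1)/2). *)
Definition BM_rel (m : nat) (u v : seq bool) : Prop :=
  u = [:: false] ++ nseq m.-1./2 true ++ [:: false] /\ v = nseq m.+1./2 true.

Definition BM_Delta (m : nat) : seq bool := nseq m true.

(** Artin-Tits group of type I_2(m): generators s = false, t = true,
    relation sts... (m letters) = tst... (m letters). *)
Definition alt (a : bool) (n : nat) : seq bool :=
  mkseq (fun i => if odd i then ~~ a else a) n.
Definition artin_I2_rel (m : nat) (u v : seq bool) : Prop :=
  u = alt false m /\ v = alt true m.

(* Main.v *)
Require Import Defs.
From mathcomp Require Import all_boot.
From mathcomp Require Import zify.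
From Stdlib Require Import Classical.
Set Implicit Arguments. Unset Strict Implicit. Unset Printing Implicit Defensive.

Section Gen.
Variable A : eqType.
Variable R : seq A -> seq A -> Prop.

Lemma mc_ctx x y u v : mcong R u v -> mcong R (x ++ u ++ y) (x ++ v ++ y).
Proof.
elim=> {u v} [u|u v _ IH|u v w _ IH1 _ IH2|x' y' u v H].
- exact: mcong_refl.
- exact: mcong_sym.
- exact: mcong_trans IH1 IH2.
- have E : forall t, x ++ (x' ++ t ++ y') ++ y = (x ++ x') ++ t ++ (y' ++ y).
    by move=> t; rewrite !catA.
  rewrite !E; exact: mcong_rel.
Qed.

Lemma mc_catl x u v : mcong R u v -> mcong R (x ++ u) (x ++ v).
Proof. by move=> H; have := mc_ctx x [::] H; rewrite !cats0. Qed.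
Lemma mc_catr y u v : mcong R u v -> mcong R (u ++ y) (v ++ y).
Proof. by move=> H; have := mc_ctx [::] y H. Qed.
Lemma mc_cat u u' v v' : mcong R u u' -> mcong R v v' -> mcong R (u ++ v) (u' ++ v').
Proof. move=> H1 H2; apply: mcong_trans (mc_catr _ H1) (mc_catl _ H2). Qed.

Lemma mc_eq u v : u = v -> mcong R u v.
Proof. by move=> ->; apply: mcong_refl. Qed.

Lemma rdiv_trans u v w : rdiv R u v -> rdiv R v w -> rdiv R u w.
Proof.
case=> p Hp [q Hq]; exists (q ++ p); rewrite -catA.
exact: mcong_trans (mc_catl q Hp) Hq.
Qed.
Lemma rdiv_r u v w : rdiv R u v -> mcong R v w -> rdiv R u w.
Proof. by case=> p Hp H; exists p; apply: mcong_trans Hp H. Qed.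
Lemma rdiv_l u v w : mcong R u v -> rdiv R u w -> rdiv R v w.
Proof. move=> H [p Hp]; exists p; apply: mcong_trans Hp; exact: mc_catl (mcong_sym H). Qed.
Lemma rdiv_refl u : rdiv R u u.
Proof. by exists [::]; apply: mcong_refl. Qed.
Lemma rdiv_nil u : rdiv R [::] u.
Proof. by exists u; rewrite cats0; apply: mcong_refl. Qed.

Variable wt : seq A -> nat.
Hypothesis wt_cat : forall u v, wt (u ++ v) = wt u + wt v.
Hypothesis wt_mc : forall u v, mcong R u v -> wt u = wt v.
Hypothesis wt_pos : forall x, 0 < wt [:: x].
Hypothesis rcancel : forall u v w, mcong R (u ++ w) (v ++ w) -> mcong R u v.
Hypothesis letter_lcm : forall x y : A, exists X Y,
  mcong R (X ++ [:: x]) (Y ++ [:: y]) /\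
  forall p q, mcong R (p ++ [:: x]) (q ++ [:: y]) ->
     exists r, mcong R (p ++ [:: x]) (r ++ X ++ [:: x]).

Definition lcmex u v := exists c, is_lcm (rdiv R) u v c.

Lemma lcm_step n :
  (forall u v z, wt z < n -> rdiv R u z -> rdiv R v z -> lcmex u v) ->
  forall u v z, wt z <= n -> rdiv R u z -> rdiv R v z -> lcmex u v.
Proof.
move=> IH u v z Hz Hu Hv.
case/lastP: u Hu => [|u' x] Hu.
  by exists v; split=> [||d _ //]; [apply: rdiv_nil | apply: rdiv_refl].
case/lastP: v Hv => [|v' y] Hv.
  by exists (rcons u' x); split=> [||d //]; [apply: rdiv_refl | apply: rdiv_nil].
have [X [Y [HXY HL]]] := letter_lcm x y.
have key : forall d, rdiv R (rcons u' x) d -> rdiv R (rcons v' y) d ->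
    exists r, mcong R (r ++ X ++ [:: x]) d /\
      rdiv R u' (r ++ X) /\ rdiv R X (r ++ X) /\
      rdiv R v' (r ++ Y) /\ rdiv R Y (r ++ Y).
  move=> d [s1 H1] [s2 H2].
  rewrite -cats1 catA in H1; rewrite -cats1 catA in H2.
  have [r Hr] := HL (s1 ++ u') (s2 ++ v') (mcong_trans H1 (mcong_sym H2)).
  exists r; split; first exact: mcong_trans (mcong_sym Hr) H1.
  have E1 : mcong R (s1 ++ u') (r ++ X) by apply: (rcancel (w:=[:: x])); apply: mcong_trans Hr _; rewrite catA; exact: mcong_refl.
  have E2 : mcong R (s2 ++ v') (r ++ Y).
    apply: (rcancel (w:=[:: y])); apply: mcong_trans H2 _.
    apply: mcong_trans (mcong_sym H1) _.
    apply: mcong_trans Hr _; rewrite -catA; exact: mc_catl HXY.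
  by split; [exists s1 | split; [exists r; apply: mcong_refl | split; [exists s2 | exists r; apply: mcong_refl]]].
have [r [Hr [[p1 Hp1] [[q1' Hq1'] [[p2 Hp2] [q2' Hq2']]]]]] := key z Hu Hv.
have wtr : wt r < wt z.
  rewrite -(wt_mc Hr) !wt_cat; have := wt_pos x; lia.
have wtrX : wt (r ++ X) < n.
  move: Hz; rewrite -(wt_mc Hr) !wt_cat; have := wt_pos x; lia.
have wtrY : wt (r ++ Y) < n.
  move: Hz; rewrite -(wt_mc Hr) (wt_mc (mc_catl r HXY)) !wt_cat; have := wt_pos y; lia.
have [c1 [[p1' Hc1u] [q1 Hc1X] Hc1m]] := IH _ _ _ wtrX (ex_intro _ p1 Hp1) (ex_intro _ q1' Hq1').
have [c2 [[p2' Hc2v] [q2 Hc2Y] Hc2m]] := IH _ _ _ wtrY (ex_intro _ p2 Hp2) (ex_intro _ q2' Hq2').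
have hq : forall c q W r0, mcong R (q ++ W) c -> rdiv R c (r0 ++ W) -> rdiv R q r0.
  move=> c q W r0 Hq [s Hs]; exists s; apply: (rcancel (w:=W)); rewrite -catA.
  by apply: mcong_trans _ Hs; apply: mc_catl.
have Hq1 : rdiv R q1 r by apply: hq Hc1X (Hc1m _ (ex_intro _ p1 Hp1) (ex_intro _ q1' Hq1')).
have Hq2 : rdiv R q2 r by apply: hq Hc2Y (Hc2m _ (ex_intro _ p2 Hp2) (ex_intro _ q2' Hq2')).
have wtr' : wt r < n by lia.
have [c3 [[p3 Hc3a] [p4 Hc3b] Hc3m]] := IH _ _ _ wtr' Hq1 Hq2.
exists (c3 ++ X ++ [:: x]); split.
- exists (p3 ++ p1'); rewrite -cats1.
  apply: mcong_trans (mc_eq (_ : _ = p3 ++ (p1' ++ u') ++ [:: x])) _; first by rewrite !catA.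
  apply: mcong_trans (mc_catl _ (mc_catr _ Hc1u)) _.
  apply: mcong_trans (mc_catl _ (mc_catr _ (mcong_sym Hc1X))) _.
  apply: mcong_trans (mc_eq (_ : _ = (p3 ++ q1) ++ X ++ [:: x])) _; first by rewrite !catA.
  exact: mc_catr Hc3a.
- exists (p4 ++ p2'); rewrite -cats1.
  apply: mcong_trans (mc_eq (_ : _ = p4 ++ (p2' ++ v') ++ [:: y])) _; first by rewrite !catA.
  apply: mcong_trans (mc_catl _ (mc_catr _ Hc2v)) _.
  apply: mcong_trans (mc_catl _ (mc_catr _ (mcong_sym Hc2Y))) _.
  apply: mcong_trans (mc_eq (_ : _ = (p4 ++ q2) ++ Y ++ [:: y])) _; first by rewrite !catA.
  apply: mcong_trans (mc_catr _ Hc3b) _.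
  exact: mc_catl (mcong_sym HXY).
- move=> d Hud Hvd.
  have [r' [Hr' [H1 [H2 [H3 H4]]]]] := key d Hud Hvd.
  have Q1 : rdiv R q1 r' by apply: hq Hc1X (Hc1m _ H1 H2).
  have Q2 : rdiv R q2 r' by apply: hq Hc2Y (Hc2m _ H3 H4).
  have [t Ht] := Hc3m _ Q1 Q2.
  exists t; apply: mcong_trans Hr'; rewrite catA; exact: mc_catr Ht.
Qed.

Lemma lcm_exists u v z : rdiv R u z -> rdiv R v z -> lcmex u v.
Proof.
have : forall n u v z, wt z < n -> rdiv R u z -> rdiv R v z -> lcmex u v.
  elim=> [//|n IH] u0 v0 z0 H; apply: (lcm_step IH (z:=z0)); lia.
by move=> H; apply: (H (wt z).+1).
Qed.

Lemma gcd_fold a b (ds : seq (seq A)) :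
  (forall d, d \in ds -> rdiv R d a /\ rdiv R d b) ->
  exists c, [/\ rdiv R c a, rdiv R c b & forall d, d \in ds -> rdiv R d c].
Proof.
elim: ds => [|d ds IH] H.
  by exists [::]; split=> //; apply: rdiv_nil.
have [|c [Ha Hb Hd]] := IH; first by move=> d' Hd'; apply: H; rewrite inE Hd' orbT.
have [Hda Hdb] := H d (mem_head _ _).
have [l [Hl1 Hl2 Hl3]] := lcm_exists Hda Ha.
exists l; split; [exact: Hl3 | exact: Hl3 |].
move=> d'; rewrite inE => /orP [/eqP -> // | Hd'].
exact: rdiv_trans (Hd _ Hd') Hl2.
Qed.

Lemma classical_filter (P : seq A -> Prop) (l : seq (seq A)) :
  exists ds : seq (seq A), (forall d, d \in ds -> P d) /\ (forall d, d \in l -> P d -> d \in ds).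
Proof.
elim: l => [|x l [ds [H1 H2]]]; first by exists [::].
case: (classic (P x)) => Px.
  exists (x :: ds); split.
    by move=> d; rewrite inE => /orP [/eqP -> //|]; apply: H1.
  by move=> d; rewrite !inE => /orP [-> //|Hd Pd]; rewrite H2 ?orbT.
exists ds; split=> // d; rewrite inE => /orP [/eqP -> //|Hd Pd]; exact: H2.
Qed.

Hypothesis finite_wt : forall n, exists l : seq (seq A), forall w, wt w <= n -> w \in l.

Lemma gcd_exists a b : exists c, is_gcd (rdiv R) a b c.
Proof.
have [l Hl] := finite_wt (wt a).
have [ds [H1 H2]] := classical_filter (fun d => rdiv R d a /\ rdiv R d b) l.
have [c [Ha Hb Hd]] := gcd_fold H1.
exists c; split=> // d Hda Hdb; apply: Hd; apply: H2; last by split.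
apply: Hl; case: Hda => p Hp; rewrite -(wt_mc Hp) wt_cat; lia.
Qed.

End Gen.
Section Rev.
Variable A : eqType.
Variable R : seq A -> seq A -> Prop.
Hypothesis Rrev : forall u v, R u v -> R (rev u) (rev v).

Lemma mc_rev u v : mcong R u v -> mcong R (rev u) (rev v).
Proof.
elim=> {u v} [u|u v _ IH|u v w _ IH1 _ IH2|x y u v H].
- exact: mcong_refl.
- exact: mcong_sym.
- exact: mcong_trans IH1 IH2.
- rewrite !rev_cat -!catA; exact: mcong_rel (Rrev H).
Qed.

Lemma mc_revE u v : mcong R (rev u) (rev v) -> mcong R u v.
Proof. by move/mc_rev; rewrite !revK. Qed.

Lemma ldiv_rev a c : ldiv R a c <-> rdiv R (rev a) (rev c).
Proof.
split=> [[b Hb]|[p Hp]].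
  by exists (rev b); rewrite -rev_cat; apply: mc_rev.
by exists (rev p); apply: mc_revE; rewrite rev_cat revK.
Qed.

Lemma lcm_rev a b c : is_lcm (rdiv R) (rev a) (rev b) (rev c) -> is_lcm (ldiv R) a b c.
Proof.
case=> H1 H2 H3; split; rewrite ?ldiv_rev //.
by move=> d /ldiv_rev Ha /ldiv_rev Hb; apply/ldiv_rev; apply: H3.
Qed.

Lemma gcd_rev a b c : is_gcd (rdiv R) (rev a) (rev b) (rev c) -> is_gcd (ldiv R) a b c.
Proof.
case=> H1 H2 H3; split; rewrite ?ldiv_rev //.
by move=> d /ldiv_rev Ha /ldiv_rev Hb; apply/ldiv_rev; apply: H3.
Qed.
End Rev.

Section Grp.
Variable A : eqType.
Variable R : seq A -> seq A -> Prop.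

Lemma gc_ctx x y u v : gcong R u v -> gcong R (x ++ u ++ y) (x ++ v ++ y).
Proof.
elim=> {u v} [u|u v _ IH|u v w _ IH1 _ IH2|x' y' u v H|x' y' a b].
- exact: gcong_refl.
- exact: gcong_sym.
- exact: gcong_trans IH1 IH2.
- have E : forall t, x ++ (x' ++ t ++ y') ++ y = (x ++ x') ++ t ++ (y' ++ y).
    by move=> t; rewrite !catA.
  rewrite !E; exact: gcong_rel.
- have E : forall t, x ++ (x' ++ t ++ y') ++ y = (x ++ x') ++ t ++ (y' ++ y).
    by move=> t; rewrite !catA.
  rewrite E; have -> : x ++ (x' ++ y') ++ y = (x ++ x') ++ (y' ++ y) by rewrite !catA.
  exact: gcong_free.
Qed.
Lemma gc_catl x u v : gcong R u v -> gcong R (x ++ u) (x ++ v).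
Proof. by move=> H; have := gc_ctx x [::] H; rewrite !cats0. Qed.
Lemma gc_catr y u v : gcong R u v -> gcong R (u ++ y) (v ++ y).
Proof. by move=> H; have := gc_ctx [::] y H. Qed.
Lemma gc_eq u v : u = v -> gcong R u v.
Proof. by move=> ->; apply: gcong_refl. Qed.

Lemma iota_cat (u v : seq A) : Defs.iota (u ++ v) = Defs.iota u ++ Defs.iota v.
Proof. by rewrite /Defs.iota map_cat. Qed.

Lemma gc_mc u v : mcong R u v -> gcong R (Defs.iota u) (Defs.iota v).
Proof.
elim=> {u v} [u|u v _ IH|u v w _ IH1 _ IH2|x y u v H].
- exact: gcong_refl.
- exact: gcong_sym.
- exact: gcong_trans IH1 IH2.
- rewrite !iota_cat; exact: gcong_rel.
Qed.

Lemma ginv_cat (u v : seq (A * bool)) : ginv (u ++ v) = ginv v ++ ginv u.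
Proof. by rewrite /ginv map_cat rev_cat. Qed.
Lemma ginvK (u : seq (A * bool)) : ginv (ginv u) = u.
Proof.
rewrite /ginv map_rev -map_comp revK.
by rewrite -[RHS]map_id; apply: eq_map => -[a b] /=; rewrite negbK.
Qed.
Lemma ginv_cons (l : A * bool) u : ginv (l :: u) = ginv u ++ [:: (l.1, ~~ l.2)].
Proof. by rewrite -cat1s ginv_cat. Qed.

Lemma gc_cancel (w : seq (A * bool)) : gcong R (w ++ ginv w) [::].
Proof.
elim: w => [|[a b] w IH] /=; first exact: gcong_refl.
rewrite ginv_cons /=.
apply: gcong_trans (_ : gcong R ([:: (a, b)] ++ [::] ++ [:: (a, ~~ b)]) _).
  rewrite -cat1s catA -catA; apply: gc_catl; rewrite catA; exact: gc_catr.
exact: (gcong_free R [::] [::] a b).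
Qed.
Lemma gc_cancel' (w : seq (A * bool)) : gcong R (ginv w ++ w) [::].
Proof. by have := gc_cancel (ginv w); rewrite ginvK. Qed.

Lemma gc_ginv u v : gcong R u v -> gcong R (ginv u) (ginv v).
Proof.
move=> H.
apply: gcong_trans (_ : gcong R (ginv u ++ (v ++ ginv v)) _).
  by rewrite -{1}[ginv u]cats0; apply: gc_catl; apply: gcong_sym; apply: gc_cancel.
rewrite catA; apply: gcong_trans (_ : gcong R ((ginv u ++ u) ++ ginv v) _).
  by apply: gc_catr; apply: gc_catl; apply: gcong_sym.
by apply: gcong_trans (gc_catr _ (gc_cancel' u)) _; apply: gcong_refl.
Qed.
End Grp.

Section Subst.
Lemma gsubst_cat (A B : eqType) (f : A -> seq (B * bool)) u v :
  gsubst f (u ++ v) = gsubst f u ++ gsubst f v.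
Proof. by rewrite /gsubst map_cat flatten_cat. Qed.
Lemma gsubst_cons (A B : eqType) (f : A -> seq (B * bool)) l u :
  gsubst f (l :: u) = (if l.2 then ginv (f l.1) else f l.1) ++ gsubst f u.
Proof. by []. Qed.

Lemma gsubst_ginv (A B : eqType) (f : A -> seq (B * bool)) u :
  gsubst f (ginv u) = ginv (gsubst f u).
Proof.
elim: u => [|[a b] u IH]; first by [].
rewrite ginv_cons gsubst_cat IH gsubst_cons ginv_cat /=; congr (_ ++ _).
by case: b => /=; rewrite ?ginvK cats0.
Qed.

Lemma gsubst_comp (A B C : eqType) (f : A -> seq (B * bool)) (g : B -> seq (C * bool)) u :
  gsubst g (gsubst f u) = gsubst (fun a => gsubst g (f a)) u.
Proof.
elim: u => [|[a b] u IH] //.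
rewrite !gsubst_cons gsubst_cat IH /=; case: b => //.
by rewrite gsubst_ginv.
Qed.

Lemma gsubst_gcong (A B : eqType) (R1 : seq A -> seq A -> Prop) (R2 : seq B -> seq B -> Prop)
  (f : A -> seq (B * bool)) :
  (forall u v, R1 u v -> gcong R2 (gsubst f (Defs.iota u)) (gsubst f (Defs.iota v))) ->
  forall u v, gcong R1 u v -> gcong R2 (gsubst f u) (gsubst f v).
Proof.
move=> Hf u v; elim=> {u v} [u|u v _ IH|u v w _ IH1 _ IH2|x y u v H|x y a b].
- exact: gcong_refl.
- exact: gcong_sym.
- exact: gcong_trans IH1 IH2.
- rewrite !gsubst_cat; apply: gc_ctx; exact: Hf.
- rewrite !gsubst_cat; rewrite -[gsubst f x ++ gsubst f y]/(gsubst f x ++ [::] ++ gsubst f y).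
  apply: gc_ctx; rewrite gsubst_cons /=; rewrite /gsubst /= ?cats0.
  by case: b => /=; [apply: gc_cancel' | apply: gc_cancel].
Qed.

Lemma gsubst_id (A : eqType) (R : seq A -> seq A -> Prop) (h : A -> seq (A * bool)) :
  (forall a, gcong R (h a) [:: (a, false)]) -> forall u, gcong R (gsubst h u) u.
Proof.
move=> Hh; elim=> [|[a b] u IH]; first exact: gcong_refl.
rewrite gsubst_cons -cat1s.
apply: gcong_trans (gc_catl _ IH) _; apply: gc_catr => /=.
case: b => //=; have := gc_ginv (Hh a); by [].
Qed.
End Subst.
Section BM.
Variable k : nat.
Hypothesis k0 : 0 < k.
Local Notation m := (k.*2.+1).
Local Notation R := (BM_rel (k.*2.+1)).
Local Notation lhs := ([:: false] ++ nseq k true ++ [:: false]).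
Local Notation rhs := (nseq k.+1 true).

Lemma BM_relE u v : R u v <-> u = lhs /\ v = rhs.
Proof.
have h1 : (k.*2.+1).-1./2 = k by rewrite /= half_double.
have h2 : (k.*2.+1).+1./2 = k.+1 by rewrite -doubleS half_double.
by rewrite /BM_rel h1 h2.
Qed.

Lemma relR x y : mcong R (x ++ lhs ++ y) (x ++ rhs ++ y).
Proof. by apply: mcong_rel; apply/BM_relE. Qed.

Lemma relR' x y u v : u = x ++ lhs ++ y -> v = x ++ rhs ++ y -> mcong R u v.
Proof. by move=> -> ->; apply: relR. Qed.

Lemma nseqS' n : nseq n.+1 true = nseq n true ++ [:: true].
Proof. by rewrite -addn1 nseqD. Qed.

Lemma nseqC n : true :: nseq n true = nseq n true ++ [:: true].
Proof. by elim: n => //= n ->. Qed.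

Lemma m_split : nseq m true = nseq k true ++ nseq k.+1 true.
Proof. by rewrite -nseqD addnS addnn. Qed.

Lemma Dcentral1 x : mcong R ([:: x] ++ nseq m true) (nseq m true ++ [:: x]).
Proof.
case: x; first by rewrite -nseqS' /=; apply: mcong_refl.
rewrite m_split.
apply: mcong_trans (_ : mcong R ([:: false] ++ nseq k true ++ lhs) _).
  apply: mcong_sym; have := relR ([:: false] ++ nseq k true) [::]; rewrite !cats0 -!catA; by [].
apply: mcong_trans (_ : mcong R ([::] ++ lhs ++ (nseq k true ++ [:: false])) _).
  by apply: mc_eq; rewrite /= -!catA.
apply: mcong_trans (relR _ _) _; apply: mc_eq.
by rewrite cat0s catA -!nseqD addSn addnS.
Qed.

Lemma Dcentral w : mcong R (w ++ nseq m true) (nseq m true ++ w).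
Proof.
elim: w => [|x w IH]; first by rewrite cats0; apply: mcong_refl.
rewrite -cat1s -catA; apply: mcong_trans (mc_catl _ IH) _.
by rewrite catA; apply: mcong_trans (mc_catr _ (Dcentral1 x)) _; rewrite -catA; apply: mcong_refl.
Qed.

Definition st := (nat * seq nat)%type.
Definition blk e := false :: nseq e true.
Definition word (S : st) : seq bool := nseq S.1 true ++ flatten (map blk (rev S.2)).

Definition stepb (S : st) : st :=
  let: (e0, L) := S in
  match L with
  | [::] => (e0.+1, [::])
  | e :: L' => if e.+1 == m then (e0 + m, 0 :: L') else (e0, e.+1 :: L')
  end.
Definition stepa (S : st) : st :=
  let: (e0, L) := S in
  match L with
  | [::] => (e0, [:: 0])
  | e :: L' =>
    if e == k then
      match L' with
      | [::] => (e0 + k.+1, [::])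
      | e' :: L'' => if e' + k.+1 < m then (e0, (e' + k.+1) :: L'')
                     else (e0 + m, (e' + k.+1 - m) :: L'')
      end
    else (e0, 0 :: e :: L')
  end.
Definition step (S : st) (l : bool) := if l then stepb S else stepa S.
Definition run (S : st) (w : seq bool) := foldl step S w.
Definition nf w := run (0, [::]) w.

Lemma wordC e0 e L : word (e0, e :: L) = word (e0, L) ++ blk e.
Proof. by rewrite /word /= rev_cons -cats1 map_cat flatten_cat /= cats0 catA. Qed.
Lemma word_addm e0 L : word (e0 + m, L) = nseq m true ++ word (e0, L).
Proof. by rewrite /word /= addnC nseqD catA. Qed.

Lemma word_step S l : mcong R (word (step S l)) (word S ++ [:: l]).
Proof.
case: S => e0 L; case: l => /=.
- case: L => [|e L].
    by apply: mc_eq; rewrite /word /= !cats0 nseqC.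
  case: ifP => /eqP He.
    rewrite word_addm wordC wordC /blk.
    apply: mcong_trans (_ : mcong R (nseq m true ++ word (e0, L) ++ [:: false]) _).
      by apply: mc_eq.
    apply: mcong_trans (mcong_sym (Dcentral _)) _.
    by apply: mc_eq; rewrite -He -!catA /= nseqC.
  by apply: mc_eq; rewrite !wordC /blk -catA /= nseqC.
- case: L => [|e L]; first by apply: mc_eq; rewrite /word /= cats0.
  case: ifP => /eqP He; last by apply: mc_eq; rewrite !wordC -catA.
  case: L => [|e' L].
    rewrite wordC He /blk.
    apply: mcong_trans (_ : mcong R (word (e0, [::]) ++ rhs ++ [::]) _).
      by apply: mc_eq; rewrite /word /= !cats0 nseqD.
    by apply: mcong_sym; have := relR (word (e0, [::])) [::]; rewrite -!catA.
  have step1 : mcong R (word (e0, e' :: L) ++ blk k ++ [:: false])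
                       (word (e0, L) ++ false :: nseq (e' + k.+1) true).
    apply: (relR' (x := word (e0, L) ++ false :: nseq e' true) (y := [::])).
      by rewrite wordC /blk !cats0 -!catA.
    by rewrite cats0 nseqD -!catA.
  rewrite wordC He -catA; apply: mcong_sym; apply: mcong_trans step1 _.
  case: ifP => Hlt; first by apply: mc_eq; rewrite wordC.
  have -> : e' + k.+1 = m + (e' + k.+1 - m) by lia.
  rewrite word_addm wordC /blk nseqD.
  apply: mcong_trans (_ : mcong R ((word (e0, L) ++ [:: false]) ++ nseq m true ++
      nseq (e' + k.+1 - m) true) _); first by apply: mc_eq; rewrite -!catA.
  rewrite catA; apply: mcong_trans (mc_catr _ (Dcentral _)) _.
  by apply: mc_eq; rewrite addKn -!catA.
Qed.

Lemma run_cat S u v : run S (u ++ v) = run (run S u) v.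
Proof. by rewrite /run foldl_cat. Qed.

Lemma word_run S w : mcong R (word (run S w)) (word S ++ w).
Proof.
elim: w S => [|l w IH] S /=; first by rewrite cats0; apply: mcong_refl.
apply: mcong_trans (IH _) _; rewrite -cat1s catA; apply: mc_catr; exact: word_step.
Qed.

Lemma word_nf w : mcong R (word (nf w)) w.
Proof. exact: word_run. Qed.

Definition valid (S : st) := all (fun e => e < m) S.2 && all (fun e => e != k) (behead S.2).

Lemma valid_step S l : valid S -> valid (step S l).
Proof.
case: S => e0 L; rewrite /valid /=; case: l => /=.
- case: L => [|e L] //= /andP [/andP [He Ha] Hb].
  by case: ifP => /eqP Hm /=; rewrite ?Ha ?Hb ?andbT /=; lia.
- case: L => [|e L] //= /andP [/andP [He Ha] Hb].
  case: ifP => /eqP Hk /=.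
    case: L Ha Hb => [|e' L] //= /andP [He' Ha] /andP [Hk' Hb].
    by case: ifP => Hl /=; rewrite Ha Hb ?andbT; lia.
  by rewrite He Ha Hb /=; apply/eqP; lia.
Qed.

Lemma valid_run S w : valid S -> valid (run S w).
Proof. by elim: w S => [|l w IH] S //= H; apply: IH; apply: valid_step. Qed.

Lemma valid_nf w : valid (nf w).
Proof. exact: valid_run. Qed.

Lemma runb0 e0 j : run (e0, [::]) (nseq j true) = (e0 + j, [::]).
Proof. by elim: j e0 => [|j IH] e0 /=; rewrite ?addn0 // IH addSnnS. Qed.

Lemma runb e0 e L j : e < m -> e + j < m.*2 ->
  run (e0, e :: L) (nseq j true) =
  if e + j < m then (e0, (e + j) :: L) else (e0 + m, (e + j - m) :: L).
Proof.
elim: j e0 e => [|j IH] e0 e He Hj /=; first by rewrite addn0 He.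
case: ifP => /eqP H.
  rewrite IH; try lia.
  have -> : (0 + j < m) = true by apply/idP; lia.
  have -> : (e + j.+1 < m) = false by apply/negbTE; lia.
  by congr (_, _ :: _); lia.
rewrite IH; try lia.
by rewrite addSnnS.
Qed.

Lemma rel_inv S : valid S -> run S lhs = run S rhs.
Proof.
case: S => e0 L; rewrite /valid => HV.
rewrite !run_cat.
have -> : run (e0, L) [:: false] = stepa (e0, L) by [].
have -> : forall S, run S [:: false] = stepa S by [].
case: L HV => [|e L] HV.
  rewrite [RHS]runb0 /= runb //; last by lia.
  rewrite add0n (_ : k < m) /=; last by lia.
  by rewrite eqxx.
case/andP: HV => /andP [He Ha] Hb.
rewrite [RHS]runb //; last by lia.
rewrite /=.
case: ifP => /eqP Hk.
  case: L Ha Hb => [|e' L] /= Ha Hb.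
    rewrite runb0 /=.
    rewrite (_ : (e + k.+1 < m) = false); last by apply/negbTE; lia.
    by congr (_, [:: _]); lia.
  case/andP: Ha => He' Ha; case/andP: Hb => Hk' Hb.
  rewrite (_ : (e + k.+1 < m) = false); last by apply/negbTE; lia.
  case: ifP => Hl.
    rewrite runb //; try lia.
    rewrite (_ : (e' + k.+1 + k < m) = false); last by apply/negbTE; lia.
    rewrite /= (_ : e' + k.+1 + k - m = e'); last by lia.
    by rewrite (negbTE Hk'); congr (_, _ :: _); lia.
  rewrite runb //; try lia.
  rewrite (_ : (e' + k.+1 - m + k < m) = true); last by apply/idP; lia.
  rewrite /= (_ : e' + k.+1 - m + k = e'); last by lia.
  by rewrite (negbTE Hk'); congr (_, _ :: _); lia.
rewrite runb //; try lia.
rewrite add0n (_ : k < m) /=; last by lia.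
by rewrite eqxx.
Qed.

Definition unstep (S : st) (l : bool) : st :=
  let: (e0, L) := S in
  if l then
    match L with
    | [::] => (e0.-1, [::])
    | e :: L' => if e == 0 then (e0 - m, m.-1 :: L') else (e0, e.-1 :: L')
    end
  else
    match L with
    | [::] => (e0 - k.+1, [:: k])
    | l0 :: L' => if l0 == 0 then (e0, L')
                  else if k < l0 then (e0, k :: (l0 - k.+1) :: L')
                  else (e0 - m, k :: (l0 + k) :: L')
    end.

Lemma unstep_step S l : valid S -> unstep (step S l) l = S.
Proof.
case: S => e0 L; rewrite /valid; case: l => /=.
- case: L => [|e L] //= /andP [/andP [He Ha] Hb].
  case: ifP => /eqP Hm /=.
    by congr (_, _ :: _); lia.
  by [].
- case: L => [|e L] //=.
  case/andP => /andP [He Ha] Hb.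
  case: ifP => /eqP Hk.
    case: L Ha Hb => [|e' L] /= Ha Hb; first by rewrite addnK Hk.
    case/andP: Ha => He' Ha; case/andP: Hb => Hk' Hb.
    case: ifP => Hl /=.
      rewrite (_ : (e' + k.+1 == 0) = false); last by apply/negbTE; lia.
      rewrite (_ : k < e' + k.+1) //; last by lia.
      by rewrite Hk addnK.
    rewrite (_ : (e' + k.+1 - m == 0) = false); last by apply/negbTE; move/eqP: Hk' => Hk'; lia.
    rewrite (_ : (k < e' + k.+1 - m) = false); last by apply/negbTE; lia.
    by rewrite addnK Hk; congr (_, _ :: _ :: _); move/eqP: Hk' => Hk'; lia.
  by [].
Qed.

Lemma run_inj S1 S2 w : valid S1 -> valid S2 -> run S1 w = run S2 w -> S1 = S2.
Proof.
elim: w S1 S2 => [|l w IH] S1 S2 V1 V2 //= H.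
have := IH _ _ (valid_step l V1) (valid_step l V2) H.
by move=> E; rewrite -(unstep_step l V1) -(unstep_step l V2) E.
Qed.

Lemma run_rel S y : valid S -> run S (lhs ++ y) = run S (rhs ++ y).
Proof. by move=> V; rewrite (run_cat S lhs y) (run_cat S rhs y) rel_inv. Qed.

Lemma mc_nf u v : mcong R u v -> nf u = nf v.
Proof.
elim=> {u v} [u|u v _ IH|u v w _ IH1 _ IH2|x y u v /BM_relE [-> ->]] //.
- by rewrite IH1 IH2.
- by rewrite /nf (run_cat _ x (lhs ++ y)) (run_cat _ x (rhs ++ y)) run_rel //; apply: valid_nf.
Qed.

Lemma nf_mc u v : nf u = nf v -> mcong R u v.
Proof.
move=> E; apply: mcong_trans (mcong_sym (word_nf u)) _; rewrite E; exact: word_nf.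
Qed.

Lemma rcancelBM u v w : mcong R (u ++ w) (v ++ w) -> mcong R u v.
Proof.
move/mc_nf; rewrite /nf !run_cat => H; apply: nf_mc.
exact: run_inj (valid_nf u) (valid_nf v) H.
Qed.

Lemma condA P : let S := stepa P in
  (S.2 = [::] /\ k < S.1) \/ (exists l L, S.2 = l :: L /\ (l = 0 \/ k < l \/ m <= S.1)).
Proof.
case: P => p0 [|e L] /=; first by right; exists 0, [::]; auto.
case: ifP => _; last by right; exists 0, [:: e & L]; auto.
case: L => [|e' L] /=; first by left; split=> //; lia.
case: ifP => Hl /=.
  by right; exists (e' + k.+1), L; split=> //; right; left; lia.
by right; exists (e' + k.+1 - m), L; split=> //; right; right; lia.
Qed.

Lemma condB Q : let S := stepb Q in
  (S.2 = [::] /\ 0 < S.1) \/ (exists l L, S.2 = l :: L /\ (0 < l \/ m <= S.1)).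
Proof.
case: Q => q0 [|e L] /=; first by left.
case: ifP => _ /=.
  by right; exists 0, L; split=> //; right; lia.
by right; exists e.+1, L; split=> //; left.
Qed.

Lemma build S : valid S ->
  (S.2 = [::] /\ k < S.1) \/ (exists l L, S.2 = l :: L /\ (k < l \/ m <= S.1)) ->
  exists T, run T rhs = S.
Proof.
case: S => s0 L V H; rewrite /valid /= in V H.
case: H => [[E H]|[l [L' [E H]]]]; subst L.
  by exists (s0 - k.+1, [::]); rewrite runb0; congr (_, _); lia.
case/andP: V => /andP [Hl Ha] Hb.
case: (ltnP k l) => Hkl.
  exists (s0, (l - k.+1) :: L'); rewrite runb; try lia.
  rewrite (_ : l - k.+1 + k.+1 < m); last by lia.
  by congr (_, _ :: _); lia.
have Hs : m <= s0 by case: H => //; lia.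
exists (s0 - m, (l + k) :: L'); rewrite runb; try lia.
rewrite (_ : (l + k + k.+1 < m) = false); last by apply/negbTE; lia.
by congr (_, _ :: _); lia.
Qed.

Lemma letter_ab p q : mcong R (p ++ [:: false]) (q ++ [:: true]) ->
  exists r, mcong R (p ++ [:: false]) (r ++ rhs).
Proof.
move=> H; have E := mc_nf H.
move: E; rewrite /nf !run_cat /= => E.
have V : valid (stepa (run (0, [::]) p)) by apply: (valid_step false); apply: valid_nf.
have [T HT] : exists T, run T rhs = stepa (run (0, [::]) p).
  apply: build => //.
  have := condA (run (0, [::]) p); have := condB (run (0, [::]) q); rewrite /= -E.
  move=> [[H1 H2]|[l [L [H1 H2]]]] [[H3 H4]|[l' [L' [H3 H4]]]].
  - by left; split; assumption.
  - by rewrite H1 in H3.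
  - by rewrite H1 in H3.
  - rewrite H1 in H3; case: H3 => E1 E2; subst l' L'.
    right; exists l, L; split=> //.
    case: H4 => [E0|[H5|H5]]; [|by left|by right].
    by subst l; case: H2 => //; right.
exists (word T).
apply: mcong_trans (mcong_sym (word_nf _)) _.
rewrite /nf run_cat /= -HT; exact: word_run.
Qed.

Definition wt (w : seq bool) := size w + count id w.
Lemma wt_cat u v : wt (u ++ v) = wt u + wt v.
Proof. rewrite /wt size_cat count_cat; lia. Qed.
Lemma wt_nseq n : wt (nseq n true) = n.*2.
Proof. by rewrite /wt size_nseq count_nseq /= mul1n addnn. Qed.
Lemma wt_mc u v : mcong R u v -> wt u = wt v.
Proof.
elim=> {u v} [u|u v _ IH|u v w _ IH1 _ IH2|x y u v /BM_relE [-> ->]] //.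
- by rewrite IH1.
- rewrite !wt_cat !wt_nseq (_ : wt [:: false] = 1) // -!addnn; lia.
Qed.
Lemma wt_pos x : 0 < wt [:: x].
Proof. by case: x. Qed.
Lemma size_wt w : size w <= wt w.
Proof. rewrite /wt; lia. Qed.

Lemma letter_lcm x y : exists X Y,
  mcong R (X ++ [:: x]) (Y ++ [:: y]) /\
  forall p q, mcong R (p ++ [:: x]) (q ++ [:: y]) ->
     exists r, mcong R (p ++ [:: x]) (r ++ X ++ [:: x]).
Proof.
have Hrel : mcong R lhs rhs by have := relR [::] [::]; rewrite !cats0.
case: x; case: y.
- exists [::], [::]; split; first exact: mcong_refl.
  by move=> p q _; exists p; apply: mcong_refl.
- exists (nseq k true), ([:: false] ++ nseq k true); split.
    by rewrite -nseqS' -catA; apply: mcong_sym.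
  move=> p q H; have [r Hr] := letter_ab (mcong_sym H).
  exists r; apply: mcong_trans H _; apply: mcong_trans Hr _; by apply: mc_eq; rewrite nseqS'.
- exists ([:: false] ++ nseq k true), (nseq k true); split.
    by rewrite -nseqS' -catA.
  move=> p q H; have [r Hr] := letter_ab H.
  exists r; apply: mcong_trans Hr _; apply: mc_catl; rewrite -catA; exact: mcong_sym.
- exists [::], [::]; split; first exact: mcong_refl.
  by move=> p q _; exists p; apply: mcong_refl.
Qed.

Fixpoint allwords n : seq (seq bool) :=
  if n is n'.+1 then [::] :: map (cons true) (allwords n') ++ map (cons false) (allwords n')
  else [:: [::]].
Lemma allwordsP n w : size w <= n -> w \in allwords n.
Proof.
elim: n w => [|n IH] [|x w] //= H; rewrite inE mem_cat.
by case: x; rewrite (map_f _ (IH _ H)) ?orbT.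
Qed.
Lemma finite_wt n : exists l : seq (seq bool), forall w, wt w <= n -> w \in l.
Proof. by exists (allwords n) => w H; apply: allwordsP; apply: leq_trans (size_wt w) H. Qed.

Lemma Rrev u v : R u v -> R (rev u) (rev v).
Proof.
move/BM_relE=> [-> ->]; apply/BM_relE; split; last by rewrite rev_nseq.
by rewrite !rev_cat rev_nseq -catA.
Qed.

Definition cstar (c : bool) := if c then nseq k.*2 true else nseq k true ++ false :: nseq k true.
Lemma cstar_r c : mcong R ([:: c] ++ cstar c) (nseq m true).
Proof.
case: c; rewrite /cstar; first exact: mcong_refl.
rewrite m_split.
apply: mcong_trans (_ : mcong R (rhs ++ nseq k true) _).
  by apply: (relR' (x := [::]) (y := nseq k true)); rewrite ?cat0s -?catA.
by apply: mc_eq; rewrite -!nseqD addSn addnS.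
Qed.
Lemma cstar_l c : mcong R (cstar c ++ [:: c]) (nseq m true).
Proof.
case: c; rewrite /cstar; first by apply: mc_eq; rewrite -nseqS'.
rewrite m_split.
by apply: (relR' (x := nseq k true) (y := [::])); rewrite ?cats0 -?catA.
Qed.

Lemma rcommon u : rdiv R u (nseq (m * size u) true).
Proof.
elim: u => [|x u [p Hp]]; first by rewrite muln0; apply: rdiv_nil.
have -> : m * size (x :: u) = m + m * size u by rewrite /= mulnS.
exists (p ++ cstar x); rewrite nseqD.
apply: mcong_trans (_ : mcong R (p ++ (cstar x ++ [:: x]) ++ u) _).
  by apply: mc_eq; rewrite -!catA.
apply: mcong_trans (mc_catl _ (mc_catr _ (cstar_l x))) _.
apply: mcong_trans (mc_catl _ (mcong_sym (Dcentral _))) _.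
rewrite catA; apply: mcong_trans (mc_catr _ Hp) _.
by apply: mc_eq; rewrite -!nseqD addnC.
Qed.

Lemma lcancelBM a b c : mcong R (a ++ b) (a ++ c) -> mcong R b c.
Proof.
move/(mc_rev Rrev); rewrite !rev_cat => /rcancelBM.
exact: (mc_revE Rrev).
Qed.

Lemma rlcm a b : exists c, is_lcm (rdiv R) a b c.
Proof.
apply: (lcm_exists wt_cat wt_mc wt_pos rcancelBM letter_lcm (z := nseq (m * (size a + size b)) true)).
  apply: rdiv_trans (rcommon a) _; exists (nseq (m * size b) true); rewrite -nseqD mulnDr addnC; exact: mcong_refl.
apply: rdiv_trans (rcommon b) _; exists (nseq (m * size a) true); rewrite -nseqD mulnDr; exact: mcong_refl.
Qed.

Lemma rgcd a b : exists c, is_gcd (rdiv R) a b c.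
Proof. exact: (gcd_exists wt_cat wt_mc wt_pos rcancelBM letter_lcm finite_wt). Qed.

Lemma llcm a b : exists c, is_lcm (ldiv R) a b c.
Proof.
have [c Hc] := rlcm (rev a) (rev b); exists (rev c).
by apply: (lcm_rev Rrev); rewrite revK.
Qed.
Lemma lgcd a b : exists c, is_gcd (ldiv R) a b c.
Proof.
have [c Hc] := rgcd (rev a) (rev b); exists (rev c).
by apply: (gcd_rev Rrev); rewrite revK.
Qed.

Lemma garsideBM : garside_monoid R (BM_Delta m).
Proof.
rewrite /BM_Delta; split.
- by split=> a b c; [exact: lcancelBM | exact: rcancelBM].
- exists wt; split.
  + exact: wt_mc.
  + by move=> a b; rewrite wt_cat.
  + move=> a H; case: a H => [|x a] H; first by case: H; apply: mcong_refl.
    by rewrite /wt /=; lia.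
- by move=> a b; split; [exact: llcm | exact: rlcm | exact: lgcd | exact: rgcd].
- split.
    move=> x; split.
      case=> y Hy; exists y; apply: (lcancelBM (a := x)).
      apply: mcong_trans (_ : mcong R ((x ++ y) ++ x) _); first by apply: mc_eq; rewrite catA.
      apply: mcong_trans (mc_catr _ Hy) _; apply: mcong_sym; apply: mcong_trans (Dcentral _) _.
      exact: mcong_refl.
    case=> y Hy; exists y; apply: (rcancelBM (w := x)).
    apply: mcong_trans (_ : mcong R (x ++ (y ++ x)) _); first by apply: mc_eq; rewrite catA.
    apply: mcong_trans (mc_catl _ Hy) _; apply: mcong_trans (Dcentral _) _.
    exact: mcong_refl.
  move=> w; exists (map (fun l => [:: l]) w); split.
    move=> x /mapP [l _ ->]; exists (cstar l); exact: cstar_r.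
  by apply: mc_eq; elim: w => //= l w <-.
- exists (allwords (wt (nseq m true))) => x [y Hy]; exists x; last exact: mcong_refl.
  apply: allwordsP; apply: leq_trans (size_wt x) _.
  by rewrite -(wt_mc Hy) wt_cat leq_addr.
Qed.

Definition Dn n := nseq (m * n) true.
Lemma DnD a b : Dn a ++ Dn b = Dn (a + b).
Proof. by rewrite /Dn -nseqD mulnDr. Qed.
Lemma DnC a b : Dn a ++ Dn b = Dn b ++ Dn a.
Proof. by rewrite !DnD addnC. Qed.
Lemma Dn1 n : Dn n.+1 = nseq m true ++ Dn n.
Proof. by rewrite /Dn mulnS nseqD. Qed.

Lemma Dncentral n w : mcong R (w ++ Dn n) (Dn n ++ w).
Proof.
elim: n => [|n IH]; first by rewrite /Dn muln0 cats0; apply: mcong_refl.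
rewrite Dn1 catA; apply: mcong_trans (mc_catr _ (Dcentral w)) _.
by rewrite -!catA; apply: mc_catl.
Qed.

Definition iw (g : seq (bool * bool)) := flatten (map (fun l => if l.2 then cstar l.1 else [:: l.1]) g).
Definition inn (g : seq (bool * bool)) := count snd g.
Lemma iw_cat x y : iw (x ++ y) = iw x ++ iw y.
Proof. by rewrite /iw map_cat flatten_cat. Qed.
Lemma inn_cat x y : inn (x ++ y) = inn x + inn y.
Proof. by rewrite /inn count_cat. Qed.
Lemma iw_iota u : iw (Defs.iota u) = u.
Proof. by elim: u => //= c u IH; rewrite -cat1s iw_cat IH. Qed.
Lemma inn_iota u : inn (Defs.iota u) = 0.
Proof. by elim: u. Qed.

Definition Erel g h := mcong R (iw g ++ Dn (inn h)) (iw h ++ Dn (inn g)).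

Lemma gc_E g h : gcong R g h -> Erel g h.
Proof.
rewrite /Erel; elim=> {g h} [g|g h _ IH|g h w _ IH1 _ IH2|x y u v H|x y a b].
- exact: mcong_refl.
- exact: mcong_sym.
- apply: (rcancelBM (w := Dn (inn h))).
  apply: mcong_trans (_ : mcong R ((iw g ++ Dn (inn h)) ++ Dn (inn w)) _).
    by apply: mc_eq; rewrite -!catA DnC.
  apply: mcong_trans (mc_catr _ IH1) _.
  apply: mcong_trans (_ : mcong R ((iw h ++ Dn (inn w)) ++ Dn (inn g)) _).
    by apply: mc_eq; rewrite -!catA DnC.
  apply: mcong_trans (mc_catr _ IH2) _.
  by apply: mc_eq; rewrite -!catA DnC.
- rewrite !iw_cat !inn_cat !iw_iota !inn_iota -!catA.
  apply: mc_ctx; have := @mcong_rel _ _ [::] [::] _ _ H; by rewrite /= !cats0.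
- rewrite !iw_cat !inn_cat.
  have -> : inn [:: (a, b); (a, ~~ b)] = 1 by rewrite /inn /=; case: b.
  have Hp : mcong R (iw [:: (a, b); (a, ~~ b)]) (nseq m true).
    by case: b; rewrite /iw /= ?cats0; [exact: cstar_l | exact: cstar_r].
  move: Hp; set P := iw _ => Hp; clearbody P.
  rewrite -!catA; apply: mc_catl.
  apply: mcong_trans (mc_catr _ Hp) _.
  rewrite (_ : inn x + (1 + inn y) = (inn x + inn y).+1); last by lia.
  rewrite Dn1 !catA; apply: mc_catr; exact: mcong_sym (Dcentral _).
Qed.

Lemma gof_inj u v : gcong R (Defs.iota u) (Defs.iota v) -> mcong R u v.
Proof.
move/gc_E; rewrite /Erel !iw_iota !inn_iota /Dn muln0 /= !cats0; by [].
Qed.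

Definition Dl := Defs.iota (nseq m true).

Lemma inv_letter c : gcong R [:: (c, true)] (Defs.iota (cstar c) ++ ginv Dl).
Proof.
apply: gcong_trans (_ : gcong R ([:: (c, true)] ++ (Dl ++ ginv Dl)) _).
  by rewrite -{1}[[:: (c, true)]]cats0; apply: gc_catl; apply: gcong_sym; apply: gc_cancel.
apply: gcong_trans (_ : gcong R ([:: (c, true)] ++ (Defs.iota ([:: c] ++ cstar c) ++ ginv Dl)) _).
  by apply: gc_catl; apply: gc_catr; apply: gc_mc; apply: mcong_sym; apply: cstar_r.
exact: (gcong_free R [::] _ c true).
Qed.

Lemma Dinv_comm a : gcong R (ginv Dl ++ Defs.iota a) (Defs.iota a ++ ginv Dl).
Proof.
apply: gcong_trans (_ : gcong R (ginv Dl ++ Defs.iota a ++ (Dl ++ ginv Dl)) _).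
  rewrite -{1}[Defs.iota a]cats0; apply: gc_catl; apply: gc_catl.
  by apply: gcong_sym; apply: gc_cancel.
apply: gcong_trans (_ : gcong R (ginv Dl ++ (Dl ++ Defs.iota a) ++ ginv Dl) _).
  apply: gc_catl; rewrite catA; apply: gc_catr.
  rewrite /Dl -!iota_cat; apply: gc_mc; exact: Dcentral.
rewrite !catA; apply: gcong_trans (gc_catr _ (gc_catr _ (gc_cancel' R Dl))) _.
exact: gcong_refl.
Qed.

Lemma gof_frac g : exists a b, gcong R g (Defs.iota a ++ ginv (Defs.iota b)).
Proof.
elim: g => [|[c s] g [a [b IH]]]; first by exists [::], [::]; apply: gcong_refl.
case: s.
  exists (cstar c ++ a), (b ++ nseq m true).
  rewrite -cat1s; apply: gcong_trans (gc_catl _ IH) _.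
  apply: gcong_trans (gc_catr _ (inv_letter c)) _.
  rewrite !iota_cat ginv_cat -!catA; apply: gc_catl; rewrite !catA; apply: gc_catr.
  exact: Dinv_comm.
exists (c :: a), b; rewrite -cat1s; exact: gc_catl IH.
Qed.

Lemma gofBM : group_of_fractions R.
Proof. by split; [exact: gof_inj | exact: gof_frac]. Qed.

Local Notation R2 := (artin_I2_rel (k.*2.+1)).

Lemma alt_SS a n : alt a n.+2 = alt a n ++
  [:: (if odd n then ~~ a else a); (if odd n.+1 then ~~ a else a)].
Proof. by rewrite /alt /mkseq -addn2 iotaD map_cat. Qed.

Lemma flat_nseqS (x : seq bool) j : flatten (nseq j.+1 x) = flatten (nseq j x) ++ x.
Proof. by rewrite -[j.+1]addn1 nseqD flatten_cat /= cats0. Qed.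

Lemma altF j : alt false (j.*2.+1) = false :: flatten (nseq j [:: true; false]).
Proof.
elim: j => [//|j IH]; rewrite doubleS alt_SS IH /= odd_double /=.
by rewrite -flat_nseqS.
Qed.
Lemma altT j : alt true (j.*2.+1) = flatten (nseq j [:: true; false]) ++ [:: true].
Proof.
elim: j => [//|j IH]; rewrite doubleS alt_SS IH /= odd_double /=.
rewrite -catA /=; rewrite (_ : [:: true, false & [:: true]] = [:: true; false] ++ [:: true]) //.
by rewrite catA -flat_nseqS.
Qed.

Definition fgen (c : bool) : seq (bool * bool) :=
  if c then [:: (true, false); (false, false)] else [:: (false, false)].
Definition ggen (c : bool) : seq (bool * bool) :=
  if c then [:: (true, false); (false, true)] else [:: (false, false)].

Definition fw (w : seq bool) := flatten (map (fun c : bool => if c then [:: true; false] else [:: false]) w).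
Lemma gsubst_f w : gsubst fgen (Defs.iota w) = Defs.iota (fw w).
Proof. by elim: w => //= c w IH; rewrite -cat1s gsubst_cat IH; case: c. Qed.
Lemma fw_nseq j : fw (nseq j true) = flatten (nseq j [:: true; false]).
Proof. by elim: j => //= j IH; rewrite -IH. Qed.
Lemma fw_cat u v : fw (u ++ v) = fw u ++ fw v.
Proof. by rewrite /fw map_cat flatten_cat. Qed.

Lemma f_hom u v : gcong R u v -> gcong R2 (gsubst fgen u) (gsubst fgen v).
Proof.
apply: gsubst_gcong => u0 v0 /BM_relE [-> ->].
rewrite !gsubst_f.
have -> : fw lhs = alt false m ++ [:: false].
  by rewrite !fw_cat fw_nseq altF.
have -> : fw rhs = alt true m ++ [:: false].
  by rewrite fw_nseq flat_nseqS altT -catA.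
rewrite !iota_cat; exact: (@gcong_rel _ R2 [::] (Defs.iota [:: false]) (alt false m) (alt true m) (conj erefl erefl)).
Qed.

Lemma gF j : gcong R (gsubst ggen (Defs.iota (alt false (j.*2.+1))))
                     (Defs.iota (false :: nseq j true)).
Proof.
elim: j => [|j IH]; first exact: gcong_refl.
rewrite doubleS alt_SS !oddS odd_double iota_cat gsubst_cat.
apply: gcong_trans (gc_catr _ IH) _.
set X := Defs.iota (false :: nseq j true) ++ [:: (true, false)].
apply: (gcong_trans (v := X ++ [:: (false, true); (false, ~~ true)] ++ [::])).
  by apply: gc_eq; rewrite /X -!catA.
apply: gcong_trans (gcong_free R X [::] false true) _; apply: gc_eq.
by rewrite /X cats0 nseqS' -cat_cons iota_cat.
Qed.

Lemma gT j : gcong R (gsubst ggen (Defs.iota (alt true (j.*2.+1))))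
                     (Defs.iota (nseq j.+1 true) ++ [:: (false, true)]).
Proof.
elim: j => [|j IH]; first exact: gcong_refl.
rewrite doubleS alt_SS !oddS odd_double iota_cat gsubst_cat.
apply: gcong_trans (gc_catr _ IH) _.
rewrite [nseq j.+2 _]nseqS' iota_cat -!catA; apply: gc_catl.
exact: (gcong_free R [::] _ false true).
Qed.

Lemma g_hom u v : gcong R2 u v -> gcong R (gsubst ggen u) (gsubst ggen v).
Proof.
apply: gsubst_gcong => u0 v0 [-> ->].
apply: gcong_trans (gF k) _; apply: gcong_sym; apply: gcong_trans (gT k) _.
apply: gcong_sym.
apply: gcong_trans (_ : gcong R (Defs.iota (false :: nseq k true) ++
        (Defs.iota [:: false] ++ ginv (Defs.iota [:: false]))) _).
  by rewrite -{1}[Defs.iota (false :: _)]cats0; apply: gc_catl; apply: gcong_sym; apply: gc_cancel.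
rewrite catA -iota_cat.
apply: gc_catr; apply: gc_mc.
by apply: (relR' (x := [::]) (y := [::])); rewrite ?cats0.
Qed.

Lemma gf_id u : gcong R (gsubst ggen (gsubst fgen u)) u.
Proof.
rewrite gsubst_comp; apply: gsubst_id => -[]; first exact: (gcong_free R [:: (true, false)] [::] false true).
exact: gcong_refl.
Qed.

Lemma fg_id u : gcong R2 (gsubst fgen (gsubst ggen u)) u.
Proof.
rewrite gsubst_comp; apply: gsubst_id => -[]; first exact: (gcong_free R2 [:: (true, false)] [::] false false).
exact: gcong_refl.
Qed.

Lemma isoBM : pres_group_iso R R2.
Proof.
exists fgen, ggen; split; [exact: f_hom | exact: g_hom | exact: gf_id | exact: fg_id].
Qed.

End BM.

Unset Implicit Arguments.

Theorem proposition6p3 (m : nat) :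
  3 <= m -> odd m ->
  [/\ garside_monoid (BM_rel m) (BM_Delta m),
      group_of_fractions (BM_rel m)
    & pres_group_iso (BM_rel m) (artin_I2_rel m)].
Proof.
move=> H3 Ho.
have Em : m = (m./2).*2.+1 by have := odd_double_half m; rewrite Ho; lia.
have k0 : 0 < m./2 by move: H3; rewrite Em; lia.
rewrite Em; split; [exact: garsideBM | exact: gofBM | exact: isoBM].
Qed.
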